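(* Let $K$ be a triangle and $k\ge1$ an integer. Let $V(K)=\mathcal P_k(K)$, $\bm W(K)=[\mathcal P_k(K)]^2$, and $\bm M(\partial K)=\{\bm\mu:\bm\mu|_F=\bm n\times p_k\text{ for some }p_k\in\mathcal P_k(F),\text{ for each edge }F\subset\partial K\}$. Then $I_M(V(K)\times\bm W(K))=0$.
   Context: $\mathcal P_k$ denotes polynomials of total degree at most $k$. Conventions in 2D: $\nabla\times\bm v=-\partial_yv_1+\partial_xv_2$, $\nabla\times p=(\partial_yp,-\partial_xp)^T$, $\bm n\times\bm v=-n_2v_1+n_1v_2$, $\bm n\times p=(n_2p,-n_1p)^T$, $\bm n\times\bm w\times\bm n:=\bm w-(\bm w\cdot\bm n)\bm n$, $\bm n$ the unit outward normal. $I_M(V(K)\times\bm W(K)):=\dim\bm M(\partial K)-\dim\{\bm n\times v|_{\partial K}:v\in V(K),\nabla\times v=\bm0\}-\dim\{\bm n\times\bm w\times\bm n|_{\partial K}:\bm w\in\bm W(K),\nabla\times\bm w=0\}$. *)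

(* Defs.v *)
(* Setting of Lemma 5.2: a triangle K in R^2 (R a real closed
   field, so that unit normals exist), polynomial spaces of degree <= k, and
   dimensions of spaces of (piecewise) functions on the boundary of K. *)
From HB Require Import structures.
From mathcomp Require Import all_boot all_order all_algebra.
Set Implicit Arguments. Unset Strict Implicit. Unset Printing Implicit Defensive.
Import Order.TTheory GRing.Theory Num.Theory.
Local Open Scope ring_scope.

Section Defs.
Variable R : rcfType.

Definition peval (k : nat) (a : nat -> nat -> R) (z : R * R) : R :=
  \sum_(i < k.+1) \sum_(j < k.+1 | (i + j <= k)%N) a i j * z.1 ^+ i * z.2 ^+ j.

Definition pdx (k : nat) (a : nat -> nat -> R) (z : R * R) : R :=
  \sum_(i < k.+1) \sum_(j < k.+1 | (i + j <= k)%N)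
     a i j * i%:R * z.1 ^+ (i.-1) * z.2 ^+ j.
Definition pdy (k : nat) (a : nat -> nat -> R) (z : R * R) : R :=
  \sum_(i < k.+1) \sum_(j < k.+1 | (i + j <= k)%N)
     a i j * j%:R * z.1 ^+ i * z.2 ^+ (j.-1).

Definition cross2 (p q : R * R) : R := p.1 * q.2 - p.2 * q.1.
Definition vsub (p q : R * R) : R * R := (p.1 - q.1, p.2 - q.2).

Definition triangle_nondeg (v : 'I_3 -> R * R) : Prop :=
  cross2 (vsub (v (inord 1)) (v (inord 0))) (vsub (v (inord 2)) (v (inord 0))) != 0.

(* edge i goes from v i to v (i+1 mod 3); the opposite vertex is v (i+2 mod 3) *)
Definition nxt (i : 'I_3) : 'I_3 := inord ((i.+1) %% 3).
Definition edge_dir (v : 'I_3 -> R * R) (i : 'I_3) : R * R := vsub (v (nxt i)) (v i).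

(* parametrization of the (relatively open) edge i, t in ]0,1[ *)
Definition epos (v : 'I_3 -> R * R) (i : 'I_3) (t : R) : R * R :=
  ((v i).1 + t * (edge_dir v i).1, (v i).2 + t * (edge_dir v i).2).

(* unit outward normal to edge i *)
Definition enormal (v : 'I_3 -> R * R) (i : 'I_3) : R * R :=
  let d := edge_dir v i in
  let q := vsub (v (nxt (nxt i))) (v i) in
  let m := (d.2, - d.1) in
  let s := if m.1 * q.1 + m.2 * q.2 < 0 then 1 else -1 in
  let l := Num.sqrt (d.1 ^+ 2 + d.2 ^+ 2) in
  (s * m.1 / l, s * m.2 / l).

(* 2D cross products, conventions of the paper *)
Definition ncross_s (n : R * R) (p : R) : R * R := (n.2 * p, - n.1 * p).
Definition ncross_v (n : R * R) (w : R * R) : R := - n.2 * w.1 + n.1 * w.2.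
(* n x w x n := w - (w.n) n *)
Definition ntang (n : R * R) (w : R * R) : R * R :=
  let s := w.1 * n.1 + w.2 * n.2 in (w.1 - s * n.1, w.2 - s * n.2).

(* ---- functions on the boundary: one function per (open) edge,
        evaluated through the parametrization t in ]0,1[ ---- *)
Definition bfun := 'I_3 -> R -> R * R.
Definition on_edge (t : R) : Prop := 0 < t /\ t < 1.

Definition lincomb (d : nat) (c : 'I_d -> R) (b : 'I_d -> bfun) (i : 'I_3) (t : R)
  : R * R :=
  (\sum_(j < d) c j * (b j i t).1, \sum_(j < d) c j * (b j i t).2).

(* S (a space of boundary functions, up to equality on the boundary)
   has dimension d: it has a basis of d elements. *)
Definition bdim (S : bfun -> Prop) (d : nat) : Prop :=
  exists b : 'I_d -> bfun,
    (forall j, S (b j)) /\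
    (forall c : 'I_d -> R,
        (forall i t, on_edge t -> lincomb c b i t = (0, 0)) -> forall j, c j = 0) /\
    (forall g, S g -> exists c : 'I_d -> R,
        forall i t, on_edge t -> g i t = lincomb c b i t).

Definition Mspace (v : 'I_3 -> R * R) (k : nat) (g : bfun) : Prop :=
  forall i : 'I_3, exists a : nat -> nat -> R,
    forall t, on_edge t -> g i t = ncross_s (enormal v i) (peval k a (epos v i t)).

(* { n x v|_dK : v in P_k(K), curl v = 0 }, curl v = (d_y v, - d_x v) *)
Definition Vtraces (v : 'I_3 -> R * R) (k : nat) (g : bfun) : Prop :=
  exists a : nat -> nat -> R,
    (forall z, (pdy k a z, - pdx k a z) = (0, 0)) /\
    forall i t, on_edge t -> g i t = ncross_s (enormal v i) (peval k a (epos v i t)).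

(* { n x w x n|_dK : w in [P_k(K)]^2, curl w = 0 }, curl w = -d_y w1 + d_x w2 *)
Definition Wtraces (v : 'I_3 -> R * R) (k : nat) (g : bfun) : Prop :=
  exists a1 a2 : nat -> nat -> R,
    (forall z, - pdy k a1 z + pdx k a2 z = 0) /\
    forall i t, on_edge t ->
      g i t = ntang (enormal v i) (peval k a1 (epos v i t), peval k a2 (epos v i t)).

Definition IM_is (v : 'I_3 -> R * R) (k : nat) (z : int) : Prop :=
  exists dM dV dW, [/\ bdim (Mspace v k) dM, bdim (Vtraces v k) dV,
                       bdim (Wtraces v k) dW & z = dM%:Z - dV%:Z - dW%:Z].

End Defs.

(* Main.v *)
Require Import Defs.
From HB Require Import structures.
From mathcomp Require Import all_boot all_order all_algebra.
From mathcomp Require Import zify ring lra.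
Set Implicit Arguments. Unset Strict Implicit. Unset Printing Implicit Defensive.
Import Order.TTheory GRing.Theory Num.Theory.
Local Open Scope ring_scope.


Definition S2 (R : rcfType) n (F : nat -> nat -> R) :=
  \sum_(i < n.+1) \sum_(j < n.+1 | (i + j <= n)%N) F i j.

Lemma S2_mk (R : rcfType) n (F : nat -> nat -> R) : S2 n F =
  \sum_(i < n.+1) \sum_(j < n.+1) (if (i + j <= n)%N then F i j else 0).
Proof. by apply: eq_bigr => i _; rewrite big_mkcond. Qed.

Lemma S2_shift_i (R : rcfType) n (F : nat -> nat -> R) :
  (forall j, F 0%N j = 0) -> S2 n.+1 F = S2 n (fun i j => F i.+1 j).
Proof.
move=> H; rewrite !S2_mk big_ord_recl big1 ?add0r; last first.
  by move=> j _; case: ifP => // _; rewrite H.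
apply: eq_bigr => i _; rewrite big_ord_recr /= ifF ?addr0; last first.
  rewrite /bump /=; lia.
apply: eq_bigr => j _ /=; rewrite /bump /= add1n addSn ltnS //.
Qed.

Lemma S2_shift_j (R : rcfType) n (F : nat -> nat -> R) :
  (forall i, F i 0%N = 0) -> S2 n.+1 F = S2 n (fun i j => F i j.+1).
Proof.
move=> H; rewrite !S2_mk big_ord_recr /= [X in _ + X]big1 ?addr0; last first.
  move=> [[|j] hj] _ /=; first by rewrite H if_same.
  by rewrite ifF //; lia.
apply: eq_bigr => i _; rewrite big_ord_recl /= H if_same add0r.
apply: eq_bigr => j _ /=; rewrite /bump /= add1n addnS ltnS //.
Qed.

Lemma S2_eq (R : rcfType) n (F G : nat -> nat -> R) :
  (forall i j, (i + j <= n)%N -> F i j = G i j) -> S2 n F = S2 n G.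
Proof. by move=> H; apply: eq_bigr => i _; apply: eq_bigr => j hij; apply: H. Qed.

Lemma S2_lin (R : rcfType) n (c : R) (F G : nat -> nat -> R) :
  S2 n (fun i j => c * F i j + G i j) = c * S2 n F + S2 n G.
Proof.
rewrite /S2 mulr_sumr -big_split; apply: eq_bigr => i _ /=.
by rewrite mulr_sumr -big_split.
Qed.

Lemma S2_ext (R : rcfType) n (F : nat -> nat -> R) :
  (forall i j, (i + j)%N = n.+1 -> F i j = 0) -> S2 n.+1 F = S2 n F.
Proof.
move=> H; rewrite !S2_mk big_ord_recr /= [X in _ + X]big1 ?addr0; last first.
  move=> [[|j] hj] _ /=; first by rewrite H ?addn0 // if_same.
  by rewrite ifF //; lia.
apply: eq_bigr => i _; rewrite big_ord_recr /= [X in _ + X](_ : _ = 0) ?addr0.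
  apply: eq_bigr => j _ /=; case: (ltngtP (i + j) n.+1) => h.
  - by rewrite ifT ?ifT //; lia.
  - by rewrite ifF ?ifF //; lia.
  - by rewrite H // if_same.
case: ifP => // h; apply: H; lia.
Qed.

Definition dxc (R : rcfType) (f : nat -> nat -> R) i j := f i.+1 j * i.+1%:R.
Definition dyc (R : rcfType) (f : nat -> nat -> R) i j := f i j.+1 * j.+1%:R.
Definition shx (R : rcfType) (a : nat -> nat -> R) i j :=
  if i is i'.+1 then a i' j else 0.
Definition shy (R : rcfType) (a : nat -> nat -> R) i j :=
  if j is j'.+1 then a i j' else 0.
Definition maskc (R : rcfType) n (a : nat -> nat -> R) i j :=
  if (i + j <= n)%N then a i j else 0.

Lemma pdx_shift (R : rcfType) n (f : nat -> nat -> R) z :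
  pdx n.+1 f z = peval n (dxc f) z.
Proof.
change (S2 n.+1 (fun i j => f i j * i%:R * z.1 ^+ i.-1 * z.2 ^+ j) = peval n (dxc f) z).
rewrite S2_shift_i //.
by move=> j; rewrite mulr0 !mul0r.
Qed.

Lemma pdy_shift (R : rcfType) n (f : nat -> nat -> R) z :
  pdy n.+1 f z = peval n (dyc f) z.
Proof.
change (S2 n.+1 (fun i j => f i j * j%:R * z.1 ^+ i * z.2 ^+ j.-1) = peval n (dyc f) z).
rewrite S2_shift_j //.
by move=> j; rewrite mulr0 !mul0r.
Qed.

Lemma peval_mulx (R : rcfType) n (a : nat -> nat -> R) z :
  z.1 * peval n a z = peval n.+1 (shx a) z.
Proof.
change (z.1 * S2 n (fun i j => a i j * z.1 ^+ i * z.2 ^+ j) = S2 n.+1 (fun i j => shx a i j * z.1 ^+ i * z.2 ^+ j)).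
rewrite S2_shift_i; last by move=> j; rewrite !mul0r.
rewrite /S2 mulr_sumr; apply: eq_bigr => i _; rewrite mulr_sumr.
apply: eq_bigr => j _ /=; rewrite exprS; ring.
Qed.

Lemma peval_muly (R : rcfType) n (a : nat -> nat -> R) z :
  z.2 * peval n a z = peval n.+1 (shy a) z.
Proof.
change (z.2 * S2 n (fun i j => a i j * z.1 ^+ i * z.2 ^+ j) = S2 n.+1 (fun i j => shy a i j * z.1 ^+ i * z.2 ^+ j)).
rewrite S2_shift_j; last by move=> j; rewrite !mul0r.
rewrite /S2 mulr_sumr; apply: eq_bigr => i _; rewrite mulr_sumr.
apply: eq_bigr => j _ /=; rewrite exprS; ring.
Qed.

Lemma peval_mono (R : rcfType) n (a : nat -> nat -> R) z :
  peval n a z = peval n.+1 (maskc n a) z.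
Proof.
change (S2 n (fun i j => a i j * z.1 ^+ i * z.2 ^+ j) = S2 n.+1 (fun i j => maskc n a i j * z.1 ^+ i * z.2 ^+ j)).
rewrite S2_ext; last first.
  by move=> i j h; rewrite /maskc ifF ?mul0r //; lia.
by apply: S2_eq => i j h; rewrite /maskc h.
Qed.

Lemma peval_lin (R : rcfType) n (c : R) (a b : nat -> nat -> R) z :
  peval n (fun i j => c * a i j + b i j) z = c * peval n a z + peval n b z.
Proof.
change (S2 n (fun i j => (c * a i j + b i j) * z.1 ^+ i * z.2 ^+ j) = c * S2 n (fun i j => a i j * z.1 ^+ i * z.2 ^+ j) + S2 n (fun i j => b i j * z.1 ^+ i * z.2 ^+ j)).
rewrite -S2_lin; apply: S2_eq => i j _; ring.
Qed.

Lemma peval_const (R : rcfType) (c : R) z : peval 0 (fun _ _ => c) z = c.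
Proof. by rewrite /peval big_ord1 big_mkcond big_ord1 /= !mulr1. Qed.

Lemma peval_S2 (R : rcfType) n (a : nat -> nat -> R) z :
  peval n a z = S2 n (fun i j => a i j * z.1 ^+ i * z.2 ^+ j).
Proof. by []. Qed.

Definition inP (R : rcfType) n (h : R * R -> R) :=
  exists a : nat -> nat -> R, forall z, h z = peval n a z.

Lemma inP_lin (R : rcfType) n (c : R) h1 h2 :
  inP n h1 -> inP n h2 -> inP n (fun z => c * h1 z + h2 z).
Proof.
move=> [a Ha] [b Hb]; exists (fun i j => c * a i j + b i j) => z.
by rewrite peval_lin Ha Hb.
Qed.

Lemma inP_mono (R : rcfType) n (h : R * R -> R) : inP n h -> inP n.+1 h.
Proof. by move=> [a Ha]; exists (maskc n a) => z; rewrite Ha peval_mono. Qed.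

Lemma inP_le (R : rcfType) m n (h : R * R -> R) : (m <= n)%N -> inP m h -> inP n h.
Proof.
move=> /subnK <-; elim: (n - m)%N => [|d IH] // H.
by rewrite addSn; apply: inP_mono; apply: IH.
Qed.

Lemma inP_const (R : rcfType) n (c : R) : inP n (fun _ => c).
Proof.
apply: (@inP_le _ 0) => //; exists (fun _ _ => c) => z.
by rewrite peval_const.
Qed.

Lemma inP_x (R : rcfType) n (h : R * R -> R) : inP n h -> inP n.+1 (fun z => z.1 * h z).
Proof. by move=> [a Ha]; exists (shx a) => z; rewrite Ha peval_mulx. Qed.

Lemma inP_y (R : rcfType) n (h : R * R -> R) : inP n h -> inP n.+1 (fun z => z.2 * h z).
Proof. by move=> [a Ha]; exists (shy a) => z; rewrite Ha peval_muly. Qed.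

Lemma inP_aff (R : rcfType) n (al be ga : R) (h : R * R -> R) : inP n h ->
  inP n.+1 (fun z => (al * z.1 + be * z.2 + ga) * h z).
Proof.
move=> H.
have H1 := inP_x H; have H2 := inP_y H; have H3 := inP_mono H.
have H4 := inP_lin ga H3 (inP_const n.+1 0).
have H5 := inP_lin be H2 H4.
have [a Ha] := inP_lin al H1 H5.
by exists a => z; rewrite -Ha; ring.
Qed.

Lemma poly_eq0_01 (R : rcfType) (p : {poly R}) :
  (forall t : R, 0 < t -> t < 1 -> p.[t] = 0) -> p = 0.
Proof.
move=> H; apply/eqP; apply/negPn/negP => Hp.
pose rs := [seq ((i.+2)%:R : R)^-1 | i <- iota 0 (size p)].
suff [h1 h2] : all (root p) rs /\ uniq rs.
  by have := max_poly_roots Hp h1 h2; rewrite size_map size_iota ltnn.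
split.
  apply/allP => x /mapP [i _ ->]; apply/rootP; apply: H.
    by rewrite invr_gt0 ltr0n.
  by rewrite invf_lt1 ?ltr0n // ltr1n.
rewrite map_inj_uniq ?iota_uniq // => i j /invr_inj /eqP.
by rewrite eqr_nat => /eqP [].
Qed.

Lemma peval_eq0 (R : rcfType) n (c : nat -> nat -> R) :
  (forall z, peval n c z = 0) -> forall i j, (i + j <= n)%N -> c i j = 0.
Proof.
move=> H i j hij.
pose E (y : R) i := \sum_(j < n.+1) (if (i + j <= n)%N then c i j else 0) * y ^+ j.
have HE : forall y i, (i < n.+1)%N -> E y i = 0.
  move=> y i' hi.
  have P0 : \poly_(i < n.+1) E y i = 0.
    apply: poly_eq0_01 => x _ _; rewrite horner_poly -[RHS](H (x, y)).
    rewrite peval_S2 S2_mk; apply: eq_bigr => k _.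
    rewrite /E mulr_suml; apply: eq_bigr => l _.
    by case: ifP => _ /=; [ring | rewrite !mul0r].
  by have := congr1 (fun p : {poly R} => p`_i') P0; rewrite coef_poly hi coef0.
pose Q := \poly_(j < n.+1) (if (i + j <= n)%N then c i j else 0).
have Q0 : Q = 0.
  apply: poly_eq0_01 => y _ _; rewrite horner_poly -[RHS](HE y i) //; lia.
have := congr1 (fun p : {poly R} => p`_j) Q0; rewrite coef_poly coef0 hij ifT //; lia.
Qed.


Definition X1 (R : rcfType) (v : 'I_3 -> R * R) (i : 'I_3) : {poly R} :=
  ((v i).1)%:P + 'X * ((edge_dir v i).1)%:P.
Definition X2 (R : rcfType) (v : 'I_3 -> R * R) (i : 'I_3) : {poly R} :=
  ((v i).2)%:P + 'X * ((edge_dir v i).2)%:P.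

Definition Tp (R : rcfType) (v : 'I_3 -> R * R) (i : 'I_3) n (a : nat -> nat -> R) : {poly R} :=
  \sum_(p < n.+1) \sum_(q < n.+1 | (p + q <= n)%N) a p q *: (X1 v i ^+ p * X2 v i ^+ q).

Lemma Tp_eval (R : rcfType) (v : 'I_3 -> R * R) i n a t :
  (Tp v i n a).[t] = peval n a (epos v i t).
Proof.
rewrite /Tp horner_sum; apply: eq_bigr => p _; rewrite horner_sum.
apply: eq_bigr => q _; rewrite /X1 /X2 !hornerE /=; ring.
Qed.

Lemma Tp_size (R : rcfType) (v : 'I_3 -> R * R) i n a :
  (size (Tp v i n a) <= n.+1)%N.
Proof.
rewrite /Tp; apply: (big_ind (fun p : {poly R} => size p <= n.+1)%N).
- by rewrite size_poly0.
- by move=> p q hp hq; apply: leq_trans (size_polyD _ _) _; rewrite geq_max hp hq.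
move=> p _; apply: (big_ind (fun p : {poly R} => size p <= n.+1)%N).
- by rewrite size_poly0.
- by move=> r s hp hq; apply: leq_trans (size_polyD _ _) _; rewrite geq_max hp hq.
move=> q hpq; apply: leq_trans (size_scale_leq _ _) _.
have sX (c d : R) : (size (c%:P + 'X * d%:P)%R <= 2)%N.
  have := size_polyD c%:P ('X * d%:P); have := size_polyMleq 'X d%:P.
  have := size_polyC_leq1 c; have := size_polyC_leq1 d; rewrite size_polyX; lia.
have sE (c d : R) m : (size ((c%:P + 'X * d%:P) ^+ m)%R <= m.+1)%N.
  apply: leq_trans (size_poly_exp_leq _ _) _; rewrite ltnS.
  have := sX c d; case: (size _) => [|[|[|?]]] //= _; rewrite ?mul0n ?mul1n //.
apply: leq_trans (size_polyMleq _ _) _.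
have := sE (v i).1 (edge_dir v i).1 p; have := sE (v i).2 (edge_dir v i).2 q.
rewrite /X1 /X2; lia.
Qed.

Lemma Tp_deriv (R : rcfType) (v : 'I_3 -> R * R) i n a t :
  (Tp v i n a)^`().[t] = (edge_dir v i).1 * pdx n a (epos v i t)
                        + (edge_dir v i).2 * pdy n a (epos v i t).
Proof.
have dX1 : (X1 v i)^`() = ((edge_dir v i).1)%:P.
  by rewrite /X1 derivD derivC add0r derivM derivX derivC mulr0 addr0 mul1r.
have dX2 : (X2 v i)^`() = ((edge_dir v i).2)%:P.
  by rewrite /X2 derivD derivC add0r derivM derivX derivC mulr0 addr0 mul1r.
rewrite /Tp linear_sum horner_sum /pdx /pdy !mulr_sumr -big_split.
apply: eq_bigr => p _; rewrite linear_sum horner_sum !mulr_sumr -big_split.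
apply: eq_bigr => q _ /=.
rewrite derivZ derivM !deriv_exp dX1 dX2 /X1 /X2 !(hornerZ, hornerD, hornerM, hornerMn, horner_exp, hornerC, hornerX) /=.
rewrite !mulr_natr; move: (_ ^+ p.-1) (_ ^+ q) (_ ^+ p) (_ ^+ q.-1) (a p q) => A B C D E.
ring.
Qed.


Lemma nxt_val (i : 'I_3) : nat_of_ord (nxt i) = (i.+1 %% 3)%N.
Proof. by rewrite /nxt inordK // ltn_mod. Qed.

Lemma nxt3 (i : 'I_3) : nxt (nxt (nxt i)) = i.
Proof. by apply: val_inj => /=; rewrite !nxt_val; case: i => [[|[|[|]]] ?]. Qed.

Lemma ord3_cases (j l : 'I_3) : l = j \/ l = nxt j \/ l = nxt (nxt j).
Proof.
case: j => [[|[|[|j]]] hj] //; case: l => [[|[|[|l]]] hl] //;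
 first [ by left; apply: val_inj
       | by right; left; apply: val_inj => /=; rewrite /= ?nxt_val
       | by right; right; apply: val_inj => /=; rewrite /= !nxt_val ].
Qed.

Lemma nxt_neq (i : 'I_3) : [/\ nxt i != i, nxt (nxt i) != i & nxt (nxt i) != nxt i].
Proof.
by rewrite -!(inj_eq val_inj) /= !nxt_val; case: i => [[|[|[|]]] ?].
Qed.

Definition Dt (R : rcfType) (v : 'I_3 -> R * R) (j : 'I_3) : R :=
  cross2 (vsub (v (nxt j)) (v j)) (vsub (v (nxt (nxt j))) (v j)).

Lemma Dt_nxt (R : rcfType) (v : 'I_3 -> R * R) j : Dt v (nxt j) = Dt v j.
Proof. by rewrite /Dt nxt3 /cross2 /vsub /=; ring. Qed.

Lemma Dt_ne0 (R : rcfType) (v : 'I_3 -> R * R) j : triangle_nondeg v -> Dt v j != 0.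
Proof.
move=> H.
have h0 : Dt v ord0 != 0.
  have e1 : nxt ord0 = inord 1 :> 'I_3 by apply/eqP.
  have e2 : nxt (inord 1) = inord 2 :> 'I_3 by apply: ord_inj; rewrite nxt_val !inordK.
  have e0 : ord0 = inord 0 :> 'I_3 by apply: ord_inj; rewrite inordK.
  by rewrite /Dt e1 e2 e0.
case: (ord3_cases ord0 j) => [->|[->|->]] //; rewrite ?Dt_nxt //.
Qed.

Definition lam (R : rcfType) (v : 'I_3 -> R * R) (j : 'I_3) (z : R * R) : R :=
  cross2 (vsub (v (nxt j)) z) (vsub (v (nxt (nxt j))) z) / Dt v j.

Lemma lam_vert (R : rcfType) (v : 'I_3 -> R * R) j l : triangle_nondeg v ->
  lam v j (v l) = (l == j)%:R.
Proof.
move=> H; have [n1 n2 n3] := nxt_neq j.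
case: (ord3_cases j l) => [e|[e|e]]; subst l.
- rewrite eqxx /lam divff //; exact: Dt_ne0.
- by rewrite (negbTE n1) /lam /cross2 /vsub /= !subrr !mul0r subrr mul0r.
- by rewrite (negbTE n2) /lam /cross2 /vsub /= !subrr !mulr0 subrr mul0r.
Qed.

Definition affine (R : rcfType) (h : R * R -> R) :=
  exists al be ga : R, forall z, h z = al * z.1 + be * z.2 + ga.

Lemma lam_aff (R : rcfType) (v : 'I_3 -> R * R) j : affine (lam v j).
Proof.
rewrite /lam /cross2 /vsub.
set a := v (nxt j); set b := v (nxt (nxt j)); set D := Dt v j.
exists ((a.2 - b.2) / D), ((b.1 - a.1) / D), ((a.1 * b.2 - a.2 * b.1) / D) => z /=.
ring.
Qed.

Lemma aff_inP (R : rcfType) n (h : R * R -> R) : affine h -> inP n.+1 h.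
Proof.
move=> [al [be [ga Hh]]].
have := inP_aff al be ga (inP_const n 1); move=> [a Ha].
by exists a => z; rewrite -Ha Hh mulr1.
Qed.

Lemma aff_edge (R : rcfType) (v : 'I_3 -> R * R) i (h : R * R -> R) t : affine h ->
  h (epos v i t) = (1 - t) * h (v i) + t * h (v (nxt i)).
Proof.
by move=> [al [be [ga Hh]]]; rewrite !Hh /epos /edge_dir /vsub /=; ring.
Qed.

Lemma lam_edge (R : rcfType) (v : 'I_3 -> R * R) i j t : triangle_nondeg v ->
  lam v j (epos v i t) = (1 - t) * (i == j)%:R + t * (nxt i == j)%:R.
Proof. by move=> H; rewrite (aff_edge v i t (lam_aff v j)) !lam_vert. Qed.

Definition Nd (R : rcfType) (v : 'I_3 -> R * R) i : R :=
  (edge_dir v i).1 ^+ 2 + (edge_dir v i).2 ^+ 2.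

Lemma Nd_gt0 (R : rcfType) (v : 'I_3 -> R * R) i : triangle_nondeg v -> 0 < Nd v i.
Proof.
move=> H; rewrite /Nd lt_def addr_ge0 ?sqr_ge0 // andbT; apply/negP => /eqP h.
move: (paddr_eq0 (sqr_ge0 (edge_dir v i).1) (sqr_ge0 (edge_dir v i).2)).
rewrite h eqxx => /esym /andP [h1 h2].
move: h1 h2; rewrite !expf_eq0 /= => /eqP h1 /eqP h2.
have := Dt_ne0 i H; rewrite /Dt /cross2 /vsub /=.
move: h1 h2; rewrite /edge_dir /vsub /= => -> ->.
by rewrite !mul0r subrr eqxx.
Qed.

Lemma enormal_c (R : rcfType) (v : 'I_3 -> R * R) i : triangle_nondeg v ->
  exists c : R, c ^+ 2 = (Nd v i)^-1 /\
    enormal v i = (c * (edge_dir v i).2, c * - (edge_dir v i).1).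
Proof.
move=> H; have hN := Nd_gt0 i H.
rewrite /enormal; set s := (if _ then _ else _).
set l := Num.sqrt _.
have hl : l ^+ 2 = Nd v i by rewrite sqr_sqrtr // ltW.
have hs : s ^+ 2 = 1 by rewrite /s; case: ifP => _; rewrite ?expr1n ?sqrrN ?expr1n.
exists (s / l); split; first by rewrite exprMn exprVn hl hs mul1r.
by congr (_, _); rewrite /=; ring.
Qed.

Lemma ntang_formula (R : rcfType) (v : 'I_3 -> R * R) i (w : R * R) : triangle_nondeg v ->
  ntang (enormal v i) w =
    ((w.1 * (edge_dir v i).1 + w.2 * (edge_dir v i).2) / Nd v i * (edge_dir v i).1,
     (w.1 * (edge_dir v i).1 + w.2 * (edge_dir v i).2) / Nd v i * (edge_dir v i).2).
Proof.
move=> H; have hN := Nd_gt0 i H; have [c [hc ->]] := enormal_c i H.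
have hN0 : Nd v i != 0 by rewrite gt_eqF.
move: hc hN0; rewrite /Nd /ntang; case: (edge_dir v i) => d1 d2 /= hc hN0.
congr (_, _).
  rewrite (_ : _ - _ = w.1 - c ^+ 2 * (d2 * (w.1 * d2 - w.2 * d1))); last by ring.
  rewrite hc; field => //.
rewrite (_ : _ - _ = w.2 + c ^+ 2 * (d1 * (w.1 * d2 - w.2 * d1))); last by ring.
rewrite hc; field => //.
Qed.

Lemma ncross_eq0 (R : rcfType) (v : 'I_3 -> R * R) i (p : R) : triangle_nondeg v ->
  ncross_s (enormal v i) p = (0, 0) -> p = 0.
Proof.
move=> H; have hN := Nd_gt0 i H; have [c [hc ->]] := enormal_c i H.
rewrite /ncross_s /= => [[h1 h2]].
apply/eqP; apply: contraT => hp.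
have c0 : c != 0.
  apply/negP => /eqP c0; move: hc; rewrite c0 expr0n /= => /esym /eqP.
  by rewrite invr_eq0 gt_eqF.
have cp : c * p != 0 by rewrite mulf_neq0.
have e2 : c * p * (edge_dir v i).1 = 0.
  by rewrite /edge_dir /vsub /= -[RHS]oppr0 -[in RHS]h1; ring.
have e1 : c * p * (edge_dir v i).2 = 0.
  by rewrite /edge_dir /vsub /= -[RHS]oppr0 -[in RHS]h2; ring.
move/eqP: e1; rewrite mulf_eq0 (negbTE cp) /= => /eqP d2z.
move/eqP: e2; rewrite mulf_eq0 (negbTE cp) /= => /eqP d1z.
by move: hN; rewrite /Nd /edge_dir /vsub /= d1z d2z expr0n /= add0r ltxx.
Qed.


Lemma indep_le (R : rcfType) m n (b : 'I_m -> bfun R) (b' : 'I_n -> bfun R) :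
  (forall c, (forall i t, on_edge t -> lincomb c b i t = (0, 0)) -> forall j, c j = 0) ->
  (forall j, exists c : 'I_n -> R, forall i t, on_edge t -> b j i t = lincomb c b' i t) ->
  (m <= n)%N.
Proof.
move=> Hind /fin_all_exists [C HC].
rewrite leqNgt; apply/negP => hnm.
pose A : 'M[R]_(m, n) := \matrix_(j, l) C j l.
have hK : kermx A != 0.
  apply/negP => /eqP hK; have := mxrank_ker A; rewrite hK mxrank0.
  have := rank_leq_col A; lia.
have [r hr] : exists r, row r (kermx A) != 0.
  apply/existsP; rewrite -negb_forall; apply/negP => /forallP h.
  by move/negP: hK; apply; apply/eqP/row_matrixP => r; rewrite row0; apply/eqP; apply: h.
pose u := row r (kermx A).
have uA : u *m A = 0 by rewrite /u -row_mul mulmx_ker row0.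
have := Hind (fun j => u 0 j).
have key : forall i t, on_edge t -> lincomb (fun j => u 0 j) b i t = (0, 0).
  move=> i t ht; rewrite /lincomb.
  congr (_, _).
    under eq_bigr => j _ do rewrite (HC j i t ht) /lincomb /= mulr_sumr.
    rewrite exchange_big /=; apply: big1 => l _.
    have := congr1 (fun M : 'M_(1, n) => M 0 l) uA; rewrite !mxE /= => h.
    rewrite -[RHS](mul0r (b' l i t).1) -[in RHS]h mulr_suml; apply: eq_bigr => j _.
    by rewrite /A mxE mulrA.
  under eq_bigr => j _ do rewrite (HC j i t ht) /lincomb /= mulr_sumr.
    rewrite exchange_big /=; apply: big1 => l _.
    have := congr1 (fun M : 'M_(1, n) => M 0 l) uA; rewrite !mxE /= => h.
    rewrite -[RHS](mul0r (b' l i t).2) -[in RHS]h mulr_suml; apply: eq_bigr => j _.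
    by rewrite /A mxE mulrA.
move=> /(_ key) h0; move/negP: hr; apply; apply/eqP/rowP => j.
by rewrite [RHS]mxE; exact: h0 j.
Qed.

Lemma bdim_unique (R : rcfType) (S : bfun R -> Prop) d1 d2 :
  bdim S d1 -> bdim S d2 -> d1 = d2.
Proof.
move=> [b1 [S1 [I1 G1]]] [b2 [S2 [I2 G2]]]; apply/eqP; rewrite eqn_leq.
apply/andP; split.
  by apply: (indep_le I1) => j; apply: G2.
by apply: (indep_le I2) => j; apply: G1.
Qed.


Definition lincombI (R : rcfType) (I : finType) (c : I -> R) (b : I -> bfun R) i t : R * R :=
  (\sum_x c x * (b x i t).1, \sum_x c x * (b x i t).2).

Lemma bdim_fin (R : rcfType) (S : bfun R -> Prop) (I : finType) (b : I -> bfun R) :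
  (forall x, S (b x)) ->
  (forall c : I -> R, (forall i t, on_edge t -> lincombI c b i t = (0, 0)) -> forall x, c x = 0) ->
  (forall g, S g -> exists c : I -> R, forall i t, on_edge t -> g i t = lincombI c b i t) ->
  bdim S #|I|.
Proof.
move=> HS Hind Hsp; exists (fun j => b (enum_val j)); split; first by move=> j; apply: HS.
have E c' i t : lincomb c' (fun j => b (enum_val j)) i t
              = lincombI (fun x => c' (enum_rank x)) b i t.
  rewrite /lincomb /lincombI; congr (_, _);
  rewrite [RHS](reindex enum_val (onW_bij _ (enum_val_bij _))) /=;
  by apply: eq_bigr => j _; rewrite enum_valK.
split.
  move=> c' H j; have := Hind (fun x => c' (enum_rank x)).
  move=> /(_ _) /(_ (enum_val j)); rewrite enum_valK; apply.
  by move=> i t ht; rewrite -E; apply: H.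
move=> g /Hsp [c Hc]; exists (fun j => c (enum_val j)) => i t ht.
rewrite Hc // E /lincombI; congr (_, _); apply: eq_bigr => x _; by rewrite enum_rankK.
Qed.

Lemma sum_pair (R : rcfType) (I J : finType) (F : I * J -> R) :
  \sum_x F x = \sum_i \sum_j F (i, j).
Proof. by rewrite pair_bigA; apply: eq_bigr => [[i j]] _. Qed.

Lemma peval0 (R : rcfType) n (z : R * R) : peval n (fun _ _ => 0) z = 0.
Proof. by rewrite /peval big1 // => i _; rewrite big1 // => j _; rewrite !mul0r. Qed.

Lemma inP_pow (R : rcfType) m (h : R * R -> R) : affine h -> inP m (fun z => h z ^+ m).
Proof.
move=> [al [be [ga Hh]]]; elim: m => [|m IH].
  by have [a Ha] := inP_const 0 (1 : R); exists a => z; rewrite expr0 -Ha.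
have [a Ha] := inP_aff al be ga IH; exists a => z; rewrite -Ha exprS Hh //.
Qed.

Lemma inP_peval (R : rcfType) n (h : R * R -> R) : inP n h ->
  exists a, forall z, h z = peval n a z.
Proof. by []. Qed.


Arguments enormal : simpl never.
Arguments ncross_s : simpl never.

Definition bM (R : rcfType) (v : 'I_3 -> R * R) k (x : 'I_3 * 'I_k.+1) : bfun R :=
  fun i t => if i == x.1 then ncross_s (enormal v i) (t ^+ x.2) else (0, 0).
Arguments bM {R} v k x.

Lemma bM_comb (R : rcfType) (v : 'I_3 -> R * R) k c i t :
  lincombI c (bM v k) i t = ncross_s (enormal v i) (\sum_(m < k.+1) c (i, m) * t ^+ m).
Proof.
rewrite /lincombI /ncross_s; congr (_, _);
  rewrite sum_pair (bigD1 i) //= [X in _ + X]big1 ?addr0.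
- by rewrite mulr_sumr; apply: eq_bigr => m _; rewrite /bM /= eqxx /ncross_s /=; ring.
- by move=> j hj; apply: big1 => m _; rewrite /bM /= eq_sym (negbTE hj) mulr0.
- by rewrite mulr_sumr; apply: eq_bigr => m _; rewrite /bM /= eqxx /ncross_s /=; ring.
- by move=> j hj; apply: big1 => m _; rewrite /bM /= eq_sym (negbTE hj) mulr0.
Qed.

Lemma lam_nxt_edge (R : rcfType) (v : 'I_3 -> R * R) i t : triangle_nondeg v ->
  lam v (nxt i) (epos v i t) = t.
Proof.
move=> H; have [n1 _ _] := nxt_neq i.
by rewrite lam_edge // eqxx eq_sym (negbTE n1) mulr0 add0r mulr1.
Qed.

Lemma bdim_M (R : rcfType) (v : 'I_3 -> R * R) k : triangle_nondeg v ->
  bdim (Mspace v k) (3 * k.+1).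
Proof.
move=> Hnd; have -> : (3 * k.+1)%N = #|{: 'I_3 * 'I_k.+1}| by rewrite card_prod !card_ord.
apply: (@bdim_fin _ _ _ (bM v k)).
- move=> x i; case: (eqVneq i x.1) => [e|ne].
    have := inP_le (ltnSE (ltn_ord x.2)) (inP_pow x.2 (lam_aff v (nxt i))).
    move=> [a Ha]; exists a => t ht.
    by rewrite /bM e eqxx -Ha -e lam_nxt_edge.
  by exists (fun _ _ => 0) => t _; rewrite /bM (negbTE ne) peval0 /ncross_s !mulr0.
- move=> c H [i m].
  have P0 : \poly_(j < k.+1) c (i, inord j) = 0.
    apply: poly_eq0_01 => t h0 h1; rewrite horner_poly.
    apply: (ncross_eq0 (i := i) Hnd); rewrite -[RHS](H i t) ?bM_comb //.
    by congr ncross_s; apply: eq_bigr => j _; rewrite inord_val.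
  by have := congr1 (fun p : {poly R} => p`_m) P0; rewrite coef_poly ltn_ord coef0 inord_val.
- move=> g Hg; have [A HA] := fin_all_exists Hg.
  exists (fun x : 'I_3 * 'I_k.+1 => (Tp v x.1 k (A x.1))`_x.2) => i t ht.
  by rewrite bM_comb HA // -Tp_eval (horner_coef_wide _ (Tp_size _ _ _ _)).
Qed.


Arguments enormal : simpl never.

Definition d00 (R : rcfType) (i j : nat) : R := if (i == 0%N) && (j == 0%N) then 1 else 0.

Lemma peval_d00 (R : rcfType) n (z : R * R) : peval n (@d00 R) z = 1.
Proof.
rewrite peval_S2 S2_mk big_ord_recl big_ord_recl /= /bump /=.
rewrite big1 ?addr0; last by move=> j _; case: ifP => _ //; rewrite /d00 /= !mul0r.
rewrite big1 ?addr0; last first.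
  by move=> i _; apply: big1 => j _; case: ifP => _ //; rewrite /d00 /= !mul0r.
by rewrite /d00 /= !mulr1.
Qed.

Lemma pdx_d00 (R : rcfType) n (z : R * R) : pdx n (@d00 R) z = 0.
Proof.
apply: big1 => i _; apply: big1 => j _.
by case: i => [[|i] hi] /=; rewrite /d00 /= ?mulr0 ?mul0r.
Qed.

Lemma pdy_d00 (R : rcfType) n (z : R * R) : pdy n (@d00 R) z = 0.
Proof.
apply: big1 => i _; apply: big1 => j _.
case: j => [[|j] hj] /=; rewrite /d00 /= ?mulr0 ?mul0r //.
by rewrite andbF !mul0r.
Qed.

Lemma peval_const_coef (R : rcfType) k (a : nat -> nat -> R) :
  (forall z, pdx k a z = 0) -> (forall z, pdy k a z = 0) ->
  forall z, peval k a z = a 0%N 0%N.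
Proof.
move=> hx hy z.
have H0 : forall i j, (i + j <= k)%N -> (i != 0%N) || (j != 0%N) -> a i j = 0.
  case: k hx hy => [|k] hx hy i j hij.
    by case: i hij => [|?] //; case: j => [|?].
  have ex := peval_eq0 (c := dxc a) (fun z => etrans (esym (pdx_shift k a z)) (hx z)).
  have ey := peval_eq0 (c := dyc a) (fun z => etrans (esym (pdy_shift k a z)) (hy z)).
  case: i hij => [|i] hij.
    case: j hij => [|j] hij //= _.
    have := ey 0%N j; rewrite /dyc => /(_ _) /eqP; rewrite mulf_eq0 pnatr_eq0 orbF.
    by move=> /(_ _) /eqP; apply; lia.
  move=> _; have := ex i j; rewrite /dxc => /(_ _) /eqP; rewrite mulf_eq0 pnatr_eq0 orbF.
  by move=> /(_ _) /eqP; apply; lia.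
rewrite -[RHS]addr0 -[in RHS](mulr1 (a 0%N 0%N)) -(peval_d00 k z) -(peval0 k z) -peval_lin.
rewrite !peval_S2; apply: S2_eq => i j hij; rewrite /d00.
case: i hij => [|i] hij; case: j hij => [|j] hij //=; first by rewrite [in RHS]addr0 [in RHS]mulr1.
all: by rewrite [in RHS]mulr0 [in RHS]addr0 H0 ?mul0r.
all: by rewrite mulr0 addr0 H0 ?mul0r.
Qed.

Definition bV (R : rcfType) (v : 'I_3 -> R * R) (x : 'I_1) : bfun R :=
  fun i t => ncross_s (enormal v i) 1.

Lemma bV_comb (R : rcfType) (v : 'I_3 -> R * R) c i t :
  lincombI c (bV v) i t = ncross_s (enormal v i) (c ord0).
Proof. by rewrite /lincombI /bV !big_ord1 /ncross_s /=; congr (_, _); ring. Qed.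

Lemma bdim_V (R : rcfType) (v : 'I_3 -> R * R) k : triangle_nondeg v ->
  bdim (Vtraces v k) 1.
Proof.
move=> Hnd; have -> : 1%N = #|{: 'I_1}| by rewrite card_ord.
apply: (@bdim_fin _ _ _ (bV v)).
- move=> x; exists (@d00 R); split.
    by move=> z; rewrite pdx_d00 pdy_d00 oppr0.
  by move=> i t _; rewrite peval_d00.
- move=> c H x; rewrite (ord1 x); apply: (ncross_eq0 (i := ord0) Hnd).
  rewrite -(@bV_comb _ v c ord0 (2%:R^-1)); apply: H; split.
    by rewrite invr_gt0 ltr0n.
  by rewrite invf_lt1 ?ltr0n // ltr1n.
- move=> g [a [ha Hg]].
  have hx z : pdx k a z = 0.
    by have := ha z; case => _ /eqP; rewrite oppr_eq0 => /eqP.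
  have hy z : pdy k a z = 0 by have := ha z; case.
  exists (fun _ => a 0%N 0%N) => i t ht.
  by rewrite Hg // bV_comb peval_const_coef.
Qed.


Arguments enormal : simpl never.

Definition jb (b : bool) : 'I_3 := if b then nxt ord0 else ord0.

Definition hW (R : rcfType) (v : 'I_3 -> R * R) k (x : bool + 'I_3 * 'I_k) : R * R -> R :=
  match x with
  | inl b => lam v (jb b)
  | inr p => fun z => lam v p.1 z * lam v (nxt p.1) z ^+ p.2.+1
  end.
Arguments hW {R} v k x.

Lemma hW_inP (R : rcfType) (v : 'I_3 -> R * R) k x : inP k.+1 (hW v k x).
Proof.
case: x => [b|[e m]] /=; first exact: aff_inP (lam_aff v (jb b)).
have [al [be [ga Hl]]] := lam_aff v e.
have [a Ha] := inP_aff al be ga (inP_pow m.+1 (lam_aff v (nxt e))).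
have H : inP m.+2 (fun z => lam v e z * lam v (nxt e) z ^+ m.+1).
  by exists a => z; rewrite -Ha Hl.
by apply: inP_le H; have := ltn_ord m; lia.
Qed.

Lemma hW_vert (R : rcfType) (v : 'I_3 -> R * R) k x l : triangle_nondeg v ->
  hW v k x (v l) = match x with inl b => (l == jb b)%:R | inr _ => 0 end.
Proof.
move=> H; case: x => [b|[e m]] /=; first by rewrite lam_vert.
rewrite !lam_vert //; have [n1 _ _] := nxt_neq e.
case: (eqVneq l e) => [->|_]; last by rewrite mul0r.
by rewrite eq_sym (negbTE n1) ?expr0n // mulr0.
Qed.

Lemma hW_edge_inr (R : rcfType) (v : 'I_3 -> R * R) k e m i t : triangle_nondeg v ->
  hW v k (inr (e, m)) (epos v i t) = (e == i)%:R * ((1 - t) * t ^+ m.+1).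
Proof.
move=> H /=; rewrite !lam_edge //; have [n1 n2 n3] := nxt_neq i.
have f1 : (i == nxt i) = false by rewrite eq_sym (negbTE n1).
have f2 : (nxt i == i) = false by rewrite (negbTE n1).
have f3 : (i == nxt (nxt i)) = false by rewrite eq_sym (negbTE n2).
have f4 : (nxt (nxt i) == i) = false by rewrite (negbTE n2).
have f5 : (nxt i == nxt (nxt i)) = false by rewrite eq_sym (negbTE n3).
have f6 : (nxt (nxt i) == nxt i) = false by rewrite (negbTE n3).
have f7 : nxt (nxt (nxt i)) = i by rewrite nxt3.
case: (ord3_cases i e) => [->|[->|->]];
  rewrite ?f7 ?eqxx ?f1 ?f2 ?f3 ?f4 ?f5 ?f6 /= ?mulr0 ?mulr1 ?addr0 ?add0r ?mul1r ?expr0n ?mul0r //.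
by rewrite mulr0.
Qed.

Lemma deriv_eq0_const (R : rcfType) (p : {poly R}) : p^`() = 0 -> forall t, p.[t] = p.[0].
Proof.
move=> H t.
have hp : forall i, p`_i.+1 = 0.
  move=> i; have := congr1 (fun q : {poly R} => q`_i) H.
  by rewrite /= coef_deriv coef0 => /eqP; rewrite mulrn_eq0 /= => /eqP.
have -> : p = (p`_0)%:P by apply/polyP => -[|i]; rewrite coefC /= ?hp.
by rewrite !hornerC.
Qed.

Lemma epos0 (R : rcfType) (v : 'I_3 -> R * R) i : epos v i 0 = v i.
Proof. by rewrite /epos !mul0r !addr0; case: (v i). Qed.

Lemma epos1 (R : rcfType) (v : 'I_3 -> R * R) i : epos v i 1 = v (nxt i).
Proof.
by rewrite /epos /edge_dir /vsub /= !mul1r !addrA !(addrC (v i).1) !(addrC (v i).2) !addrK; case: (v (nxt i)).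
Qed.


Arguments enormal : simpl never.
Arguments hW : simpl never.

Notation IW k := (bool + 'I_3 * 'I_k.+1)%type.

Definition pairH (R : rcfType) (v : 'I_3 -> R * R) i (S : R) : R * R :=
  (S / Nd v i * (edge_dir v i).1, S / Nd v i * (edge_dir v i).2).

Definition bW (R : rcfType) (v : 'I_3 -> R * R) k (F : IW k -> nat -> nat -> R)
  (x : IW k) : bfun R :=
  fun i t => pairH v i ((Tp v i k.+2 (F x))^`().[t]).
Arguments bW {R} v k F x.

Lemma lincomb_bW (R : rcfType) (v : 'I_3 -> R * R) k F c i t :
  lincombI c (bW v k F) i t = pairH v i ((\sum_x c x *: Tp v i k.+2 (F x))^`().[t]).
Proof.
rewrite linear_sum horner_sum /lincombI /pairH; congr (_, _); rewrite !mulr_suml;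
by apply: eq_bigr => x _; rewrite linearZ /= hornerZ /bW /pairH /=; ring.
Qed.

Lemma pairH_inj (R : rcfType) (v : 'I_3 -> R * R) i S : triangle_nondeg v ->
  pairH v i S = (0, 0) -> S = 0.
Proof.
move=> H [h1 h2]; have hN := Nd_gt0 i H.
apply/eqP; apply: contraT => hS.
have hSN : S / Nd v i != 0 by rewrite mulf_neq0 // invr_eq0 gt_eqF.
move/eqP: h1; rewrite mulf_eq0 (negbTE hSN) /= => /eqP d1z.
move/eqP: h2; rewrite mulf_eq0 (negbTE hSN) /= => /eqP d2z.
by move: hN; rewrite /Nd /edge_dir /vsub /= d1z d2z expr0n /= add0r ltxx.
Qed.

Lemma bW_mem (R : rcfType) (v : 'I_3 -> R * R) k F x : triangle_nondeg v ->
  Wtraces v k.+1 (bW v k F x).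
Proof.
move=> Hnd; exists (dxc (F x)), (dyc (F x)); split.
  move=> z; rewrite pdy_shift pdx_shift.
  rewrite (_ : peval k (dxc (dyc (F x))) z = peval k (dyc (dxc (F x))) z) ?addNr //.
  by rewrite !peval_S2; apply: S2_eq => i j _; rewrite /dxc /dyc; ring.
move=> i t _; rewrite -pdx_shift -pdy_shift ntang_formula // /bW /pairH Tp_deriv.
by congr (_, _); rewrite /=; ring.
Qed.

Lemma W_indep (R : rcfType) (v : 'I_3 -> R * R) k (F : IW k -> nat -> nat -> R) :
  triangle_nondeg v -> (forall x z, hW v k.+1 x z = peval k.+2 (F x) z) ->
  forall c : IW k -> R,
  (forall i t, on_edge t -> lincombI c (bW v k F) i t = (0, 0)) -> forall x, c x = 0.
Proof.
move=> Hnd hF c H.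
pose G z := \sum_x c x * hW v k.+1 x z.
have PG i t : (\sum_x c x *: Tp v i k.+2 (F x)).[t] = G (epos v i t).
  by rewrite horner_sum; apply: eq_bigr => x _; rewrite hornerZ Tp_eval hF.
have D0 i : (\sum_x c x *: Tp v i k.+2 (F x))^`() = 0.
  apply: poly_eq0_01 => t h0 h1; apply: (pairH_inj (v := v) (i := i) Hnd).
  by rewrite -lincomb_bW; apply: H; split.
have Gc i t : G (epos v i t) = G (v i).
  by rewrite -PG (deriv_eq0_const (D0 i)) PG epos0.
have Gn i : G (v (nxt i)) = G (v i) by rewrite -epos1 Gc.
have Gv l : G (v l) = c (inl true) * (l == jb true)%:R + c (inl false) * (l == jb false)%:R.
  rewrite /G big_sumType big_bool /= [X in _ + X]big1 ?addr0; last first.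
    by move=> y _; have := hW_vert (inr y) l Hnd; rewrite /= => ->; rewrite mulr0.
  by rewrite !hW_vert.
have [n1 n2 n3] := nxt_neq (ord0 : 'I_3).
have e0 : G (v ord0) = c (inl false).
  by rewrite Gv /jb eqxx eq_sym (negbTE n1) mulr0 add0r mulr1.
have e1 : G (v (nxt ord0)) = c (inl true).
  by rewrite Gv /jb eqxx (negbTE n1) mulr0 addr0 mulr1.
have e2 : G (v (nxt (nxt ord0))) = 0.
  by rewrite Gv /jb (negbTE n2) (negbTE n3) !mulr0 addr0.
have cT : c (inl true) = 0 by rewrite -e1 -(Gn (nxt ord0)) e2.
have cF : c (inl false) = 0 by rewrite -e0 -(Gn ord0) e1 cT.
have G0 i t : G (epos v i t) = 0 by rewrite Gc Gv cT cF !mul0r addr0.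
case=> [[]|[e m]] //.
have Ge t : G (epos v e t) = (1 - t) * t * \sum_(m < k.+1) c (inr (e, m)) * t ^+ m.
  rewrite /G big_sumType big_bool /= cT cF !mul0r !add0r sum_pair (bigD1 e) //=.
  rewrite [X in _ + X]big1 ?addr0; last first.
    by move=> j hj; apply: big1 => m' _; rewrite hW_edge_inr // (negbTE hj) !mul0r mulr0.
  rewrite mulr_sumr; apply: eq_bigr => m' _; rewrite hW_edge_inr // eqxx exprS mul1r; ring.
have P0 : \poly_(j < k.+1) c (inr (e, inord j)) = 0.
  apply: poly_eq0_01 => t h0 h1; rewrite horner_poly.
  have := G0 e t; rewrite Ge => /eqP; rewrite mulf_eq0 mulf_eq0 subr_eq0.
  rewrite (gt_eqF h0) (gt_eqF h1) /= => /eqP hS; rewrite -[RHS]hS.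
  by apply: eq_bigr => j _; rewrite inord_val.
by have := congr1 (fun p : {poly R} => p`_m) P0; rewrite coef_poly ltn_ord coef0 inord_val.
Qed.


Arguments enormal : simpl never.
Arguments hW : simpl never.

Definition pot (R : rcfType) (a1 a2 : nat -> nat -> R) (i j : nat) : R :=
  if i is i'.+1 then a1 i' j / i'.+1%:R
  else if j is j'.+1 then a2 0%N j' / j'.+1%:R else 0.

Lemma pot_spec (R : rcfType) k (a1 a2 : nat -> nat -> R) :
  (forall z, - pdy k.+1 a1 z + pdx k.+1 a2 z = 0) ->
  (forall z, peval k.+1 a1 z = pdx k.+2 (pot a1 a2) z) /\
  (forall z, peval k.+1 a2 z = pdy k.+2 (pot a1 a2) z).
Proof.
move=> hc.
have hid : forall i j, (i + j <= k)%N -> a1 i j.+1 * j.+1%:R = a2 i.+1 j * i.+1%:R.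
  move=> i j hij.
  have := @peval_eq0 R k (fun i j => -1 * dyc a1 i j + dxc a2 i j).
  move=> /(_ _ i j hij); rewrite /dyc /dxc mulN1r => h.
  by apply/eqP; rewrite -subr_eq0 -opprB oppr_eq0 addrC; apply/eqP; apply: h => z;
     rewrite peval_lin mulN1r -pdy_shift -pdx_shift hc.
have nz n : (n.+1%:R : R) != 0 by rewrite pnatr_eq0.
split=> z.
  rewrite pdx_shift !peval_S2; apply: S2_eq => i j _.
  by rewrite /dxc /pot divfK.
rewrite pdy_shift !peval_S2; apply: S2_eq => i j hij.
rewrite /dyc /pot; case: i hij => [|i] hij; first by rewrite divfK.
by rewrite (mulrAC (a1 i j.+1)) hid ?mulfK //; lia.
Qed.

Lemma hW_inl (R : rcfType) (v : 'I_3 -> R * R) k b z : hW v k (inl b) z = lam v (jb b) z.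
Proof. by []. Qed.

Lemma poly_ext_all (R : rcfType) (p q : {poly R}) : (forall t, p.[t] = q.[t]) -> p = q.
Proof.
move=> H; apply/eqP; rewrite -subr_eq0; apply/eqP; apply: poly_eq0_01 => t _ _.
by rewrite hornerD hornerN H subrr.
Qed.

Lemma W_span (R : rcfType) (v : 'I_3 -> R * R) k (F : IW k -> nat -> nat -> R) :
  triangle_nondeg v -> (forall x z, hW v k.+1 x z = peval k.+2 (F x) z) ->
  forall g, Wtraces v k.+1 g ->
  exists c : IW k -> R, forall i t, on_edge t -> g i t = lincombI c (bW v k F) i t.
Proof.
move=> Hnd hF g [a1 [a2 [hc Hg]]].
have [p1 p2] := pot_spec hc; set f := pot a1 a2 in p1 p2.
have Hg' i t : on_edge t -> g i t = pairH v i ((Tp v i k.+2 f)^`().[t]).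
  move=> ht; rewrite Hg // ntang_formula // Tp_deriv p1 p2 /pairH.
  by congr (_, _); rewrite /=; ring.
pose Phi z := peval k.+2 f z.
pose C0 := Phi (v (nxt (nxt ord0))).
pose cF := Phi (v ord0) - C0.
pose cT := Phi (v (nxt ord0)) - C0.
pose Q i := Tp v i k.+2 f - C0%:P
   - (cT *: Tp v i k.+2 (F (inl true)) + cF *: Tp v i k.+2 (F (inl false))).
have QE i t : (Q i).[t] = Phi (epos v i t) - C0
   - (cT * lam v (jb true) (epos v i t) + cF * lam v (jb false) (epos v i t)).
  by rewrite /Q !(hornerD, hornerN, hornerZ, hornerC) !Tp_eval -!hF.
have [n1 n2 n3] := nxt_neq (ord0 : 'I_3).
have Qv l : Phi (v l) - C0 - (cT * lam v (jb true) (v l) + cF * lam v (jb false) (v l)) = 0.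
  rewrite !lam_vert // /jb /cT /cF /C0.
  case: (ord3_cases ord0 l) => [->|[->|->]].
  - by rewrite eqxx eq_sym (negbTE n1) mulr0 add0r mulr1; ring.
  - by rewrite eqxx (negbTE n1) mulr0 addr0 mulr1; ring.
  - by rewrite (negbTE n2) (negbTE n3) !mulr0 addr0; ring.
have Qsize i : (size (Q i) <= k.+3)%N.
  rewrite /Q; apply: leq_trans (size_polyD _ _) _; rewrite geq_max; apply/andP; split.
    apply: leq_trans (size_polyD _ _) _; rewrite geq_max Tp_size /= size_polyN.
    by apply: leq_trans (size_polyC_leq1 _) _.
  rewrite size_polyN; apply: leq_trans (size_polyD _ _) _.
  by rewrite geq_max; apply/andP; split; apply: leq_trans (size_scale_leq _ _) _; apply: Tp_size.
have Rex i : exists r : {poly R}, Q i = r * ('X - 1%:P) * ('X - 0%:P) /\ (size r <= k.+1)%N.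
  have r0 : root (Q i) 0 by apply/rootP; rewrite QE epos0 Qv.
  have [q1 hq1] := factor_theorem _ _ r0.
  have r1 : root q1 1.
    apply/rootP; have := QE i 1; rewrite epos1 Qv hq1 hornerM !hornerE subr0 mulr1.
    by [].
  have [q2 hq2] := factor_theorem _ _ r1.
  exists q2; split; first by rewrite hq1 hq2.
  have [->|q20] := eqVneq q2 0; first by rewrite size_poly0.
  have := Qsize i; rewrite hq1 hq2 size_Mmonic ?monicXsubC // ?size_Mmonic ?monicXsubC //.
    by rewrite !size_XsubC /=; lia.
  by rewrite mulf_neq0 // polyXsubC_eq0.
have [r hr] := fin_all_exists Rex.
pose c (x : IW k) : R := match x with
  | inl b => if b then cT else cF
  | inr p => - (r p.1)`_p.2 end.
exists c => i t ht; rewrite Hg' // lincomb_bW; congr pairH.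
suff -> : Tp v i k.+2 f = C0%:P + \sum_x c x *: Tp v i k.+2 (F x).
  by rewrite derivD derivC add0r.
apply: poly_ext_all => s.
have -> : Tp v i k.+2 f = r i * ('X - 1%:P) * ('X - 0%:P) + C0%:P
   + (cT *: Tp v i k.+2 (F (inl true)) + cF *: Tp v i k.+2 (F (inl false))).
  by rewrite -(proj1 (hr i)) /Q; ring.
rewrite big_sumType big_bool /=.
rewrite !(hornerD, hornerZ, hornerC) (horner_sum _ _ (fun y => c (inr y) *: Tp v i k.+2 (F (inr y)))) !hornerM !hornerXsubC.
have -> : \sum_(y : 'I_3 * 'I_k.+1) (c (inr y) *: Tp v i k.+2 (F (inr y))).[s]
        = \sum_(j < k.+1) (r i)`_j * s ^+ j * (s - 1) * (s - 0).
  rewrite sum_pair (bigD1 i) //= [X in _ + X]big1 ?addr0; last first.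
    by move=> j hj; apply: big1 => m _; rewrite hornerZ Tp_eval -hF hW_edge_inr // (negbTE hj) !mul0r mulr0.
  apply: eq_bigr => j _; rewrite hornerZ Tp_eval -hF hW_edge_inr // eqxx /c /= exprS; ring.
rewrite (horner_coef_wide _ (proj2 (hr i))) !mulr_suml.
ring.
Qed.


Lemma bdim_W (R : rcfType) (v : 'I_3 -> R * R) k : triangle_nondeg v ->
  bdim (Wtraces v k.+1) (2 + 3 * k.+1).
Proof.
move=> Hnd.
have [F hF] := fin_all_exists (fun x : IW k => @hW_inP R v k.+1 x).
have -> : (2 + 3 * k.+1)%N = #|{: IW k}| by rewrite card_sum card_bool card_prod !card_ord.
apply: (@bdim_fin _ _ _ (bW v k F)).
- by move=> x; apply: bW_mem.
- exact: W_indep Hnd hF.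
- exact: W_span Hnd hF.
Qed.

Unset Implicit Arguments.

Theorem lemma5p2 (R : rcfType) (v : 'I_3 -> R * R) (k : nat) :
  triangle_nondeg v -> (1 <= k)%N ->
  IM_is v k 0 /\ (forall z : int, IM_is v k z -> z = 0).
Proof.
move=> Hnd; case: k => [|k] // _.
have hM := bdim_M k.+1 Hnd; have hV := bdim_V k.+1 Hnd; have hW := bdim_W k Hnd.
split.
  exists (3 * k.+2)%N, 1%N, (2 + 3 * k.+1)%N; split => //.
  apply/eqP; rewrite eq_sym; apply/eqP; lia.
move=> z [dM [dV [dW [h1 h2 h3 ->]]]].
rewrite -(bdim_unique hM h1) -(bdim_unique hV h2) -(bdim_unique hW h3).
lia.
Qed.
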